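(* Let $V, W$ be real Banach spaces and let $T$ be a bijective bounded linear operator on $V$ with $T^k = I$ for some integer $k \ge 1$. Let $f: [0,\infty) \times V \to V$ satisfy, for some $\Delta t > 0$, $$f(t, Tu) = T f(t + \Delta t, u) \quad \text{for all } u \in V,\ t \ge 0.$$ Suppose there is $\Theta \in GL(V,W)$ and $\lambda < 0$ with $M^\Theta(f_t) \le \lambda$ for all $t \ge 0$. Then for every solution $u$ of $\dot u = f(t,u)$ there is a $k\Delta t$-periodic function $p: [0,\infty) \to V$ with $\|u(t) - p(t)\| \to 0$ as $t \to \infty$; namely $p(t) = \lim_{n \to \infty} u(t + nk\Delta t)$, and this limit exists for every $t \ge 0$.
   Context: For a real Banach space $X$, the right semi-inner product is $(a,b)_+ := \|a\| \lim_{h \to 0^+} \frac{\|a + hb\| - \|a\|}{h}$. For $\Theta \in GL(V,W)$ (a bijective bounded linear operator) and $g: V \to V$, $M^\Theta(g) := \sup_{u \ne v \in V} \frac{(\Theta(u-v), \Theta(g(u) - g(v)))_+}{\|\Theta(u-v)\|_W^2}$. We write $f_t = f(t,\cdot)$. Solutions are continuously differentiable curves $[0,\infty) \to V$ satisfying the equation for all $t \ge 0$. *)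

(* Defs.v *)
From HB Require Import structures.
From mathcomp Require Import all_boot all_order all_algebra.
From mathcomp Require Import all_classical all_reals all_analysis.
Set Implicit Arguments. Unset Strict Implicit. Unset Printing Implicit Defensive.
Import Order.TTheory GRing.Theory Num.Theory.
Import numFieldNormedType.Exports.
Local Open Scope classical_set_scope.
Local Open Scope ring_scope.

Definition rsip {R : realType} {W : normedModType R} (a b : W) : R :=
  `|a| * lim ((fun h : R => (`|a + h *: b| - `|a|) / h) @ 0^'+).

Definition MTheta {R : realType} {V W : normedModType R}
  (Theta : V -> W) (g : V -> V) : \bar R :=
  ereal_sup [set r : \bar R | exists u v : V, u <> v /\
     r = (rsip (Theta (u - v)) (Theta (g u - g v)) / `|Theta (u - v)| ^+ 2)%:E].

Definition isGL {R : realType} {V W : normedModType R} (Theta : {linear V -> W}) : Prop :=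
  continuous Theta /\ bijective Theta.

(* u is a solution of u' = f(t,u) on [0,oo): continuously differentiable on
   [0,oo) (one-sided derivative at 0) with u'(t) = f t (u t) for all t >= 0. *)
Definition is_solution {R : realType} {V : normedModType R}
  (f : R -> V -> V) (u : R -> V) : Prop :=
  (forall t : R, 0 < t -> is_derive t 1 u (f t (u t))) /\
  ((fun h : R => h^-1 *: (u h - u 0)) @ 0^'+ --> f 0 (u 0)) /\
  {within `[0, +oo[, continuous (fun t => f t (u t))}.

(* Main.v *)
Require Import Defs.
From HB Require Import structures.
From mathcomp Require Import all_boot all_order all_algebra.
From mathcomp Require Import all_classical all_reals all_analysis.
From mathcomp Require Import ring lra.
Import Order.TTheory GRing.Theory Num.Theory.
Import numFieldNormedType.Exports.
Local Open Scope classical_set_scope.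
Local Open Scope ring_scope.
Lemma geom_dist (R : realType) (V : normedModType R) (x : nat -> V) (B q : R) :
  0 <= q -> q < 1 -> (forall n, `|x n.+1 - x n| <= B * q ^+ n) ->
  forall n m, `|x n - x (n + m)%N| <= B * q ^+ n / (1 - q).
Proof.
move=> q0 q1 H n m.
have q1' : 1 - q != 0 by rewrite subr_eq0 eq_sym lt_eqF.
have B0 : 0 <= B by have := H 0%N; rewrite expr0 mulr1; apply: le_trans.
suff : `|x n - x (n + m)%N| <= B * q ^+ n * (1 - q ^+ m) / (1 - q).
  move/le_trans; apply; rewrite ler_pM2r ?invr_gt0 ?subr_gt0 //.
  rewrite -[leRHS]mulr1 ler_wpM2l ?mulr_ge0 ?exprn_ge0 //.
  by rewrite lerBlDr lerDl exprn_ge0.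
elim: m => [|m IH].
  by rewrite addn0 subrr normr0 expr0 subrr mulr0 mul0r.
rewrite addnS.
have -> : x n - x (n + m).+1 = (x n - x (n + m)%N) - (x (n + m).+1 - x (n+m)%N)
  by rewrite opprB addrA subrK.
apply: (le_trans (ler_normB _ _)).
apply: (le_trans (lerD IH (H (n + m)%N))).
rewrite exprD exprS.
rewrite le_eqVlt; apply/orP; left; apply/eqP; field; exact: q1'.
Qed.
Lemma geom_cvg (R : realType) (V : completeNormedModType R) (x : nat -> V) (B q : R) :
  0 <= q -> q < 1 -> (forall n, `|x n.+1 - x n| <= B * q ^+ n) ->
  cvgn x /\ `|x 0%N - limn x| <= B / (1 - q).
Proof.
move=> q0 q1 H.
have D := @geom_dist _ _ x B q q0 q1 H.
have q1' : 0 < 1 - q by rewrite subr_gt0.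
have cx : cvgn x.
  apply/cauchy_cvgP; apply: cauchy_exP => e e0.
  have : (fun n => B * q ^+ n / (1 - q)) @ \oo --> 0.
    have -> : (fun n => B * q ^+ n / (1 - q)) = (fun n => geometric (B / (1 - q)) q n).
      by apply: funext => n; rewrite /geometric /=; rewrite mulrAC.
    by apply: cvg_geometric; rewrite ger0_norm.
  move/cvgrPdist_lt => /(_ e e0) [N _ HN].
  exists (x N); exists N => // m /= Nm.
  rewrite -ball_normE /ball_ /=.
  have -> : m = (N + (m - N))%N by rewrite subnKC.
  apply: le_lt_trans (D N (m - N)%N) _.
  have := HN N (leqnn N); rewrite /= sub0r normrN; apply: le_lt_trans.
  exact: ler_norm.
split => //.
have : (fun m => `|x 0%N - x m|) @ \oo --> `|x 0%N - limn x|.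
  apply: cvg_norm; apply: cvgB; [exact: cvg_cst | exact: cx].
move=> /cvgr_to_le; apply; apply: nearW => m.
have := D 0%N m; rewrite expr0 mulr1 add0n; exact.
Qed.
Section BI.
Variables (R : realType) (V W : completeNormedModType R) (Th : {linear V -> W}).
Hypothesis (cTh : continuous Th) (bTh : bijective Th).

Let D (n : nat) := [set y : W | forall e, 0 < e -> exists x : V, `|x| <= n%:R /\ `|Th x - y| < e].

Let openDC n : open (~` D n).
Proof.
rewrite openE => y /= Hy; rewrite /interior; apply/nbhs_ballP.
have [e [e0 He]] : exists e, 0 < e /\ forall x : V, `|x| <= n%:R -> e <= `|Th x - y|.
  apply: contra_notP Hy => Hn e e0.
  apply: contra_notP Hn => Hn'; exists e; split => // x xn.
  rewrite leNgt; apply/negP => Hlt; apply: Hn'; by exists x.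
exists (e / 2); first by apply: divr_gt0.
move=> z; rewrite -ball_normE /ball_ /= => yz Dz.
have [x [xn Hx]] := Dz (e / 2) (divr_gt0 e0 (ltr0Sn _ 1)).
have := He x xn.
have : `|Th x - y| <= `|Th x - z| + `|z - y|.
  by rewrite -(subrKA z); apply: ler_normD.
rewrite distrC in yz. lra.
Qed.

Let notdense : exists n, ~ dense (~` D n).
Proof.
have [//|Hn] := pselect (exists n, ~ dense (~` D n)); exfalso.
have hd : forall i, open (~` D i) /\ dense (~` D i).
  move=> i; split; first exact: openDC.
  by apply: contra_notP Hn => Hi; exists i.
have := Baire hd (O := setT).
case => [||y [_ Hy]]; first by exists 0.
  exact: openT.
case: bTh => g gK Kg.
set n := (Num.Def.trunc `|g y|).+1.
apply: (Hy n Logic.I) => e e0; exists (g y); split.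
  exact/ltW/truncnS_gt.
by rewrite Kg subrr normr0.
Qed.
Let approx : exists c, 0 < c /\ forall y, exists x, `|x| <= c * `|y| /\ `|Th x - y| <= `|y| / 2.
Proof.
have [n Hn] := notdense.
have [U0 [[y0 Oy0] [oO HO]]] : exists U0, U0 !=set0 /\ open U0 /\ U0 `<=` D n.
  apply: contra_notP Hn => H U0 [y0 Oy0] oO; apply: contra_notP H => H'.
  exists U0; split; first by exists y0.
  split => // z Oz; apply: contra_notP H' => nz; by exists z.
move: oO; rewrite openE => /(_ y0 Oy0); rewrite /interior => /nbhs_ballP [r /= r0 Hr].
have step2 : forall w, `|w| < r -> forall e, 0 < e ->
    exists x, `|x| <= 2 * n%:R /\ `|Th x - w| < e.
  move=> w wr e e0.
  have h1 : D n (y0 + w).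
    apply: HO; apply: Hr; rewrite -ball_normE /ball_ /=.
    by rewrite opprD addrA subrr sub0r normrN.
  have h2 : D n y0 by apply: HO.
  have e2 : 0 < e / 2 by apply: divr_gt0.
  have [x1 [x1n Hx1]] := h1 _ e2.
  have [x2 [x2n Hx2]] := h2 _ e2.
  exists (x1 - x2); split.
    apply: le_trans (ler_normB _ _) _; lra.
  have -> : Th (x1 - x2) - w = (Th x1 - (y0 + w)) - (Th x2 - y0).
    rewrite linearB /=; rewrite !opprD !opprK -!addrA; congr (_ + _); rewrite [RHS]addrC addrA addrK addrC //.
  apply: le_lt_trans (ler_normB _ _) _; lra.
exists (4 * (n%:R + 1) / r); split.
  by apply: divr_gt0 => //; apply: mulr_gt0 => //; apply: ltr_wpDl.
move=> y; have [->|y0'] := eqVneq y 0.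
  by exists 0; rewrite linear0 subrr !normr0 mulr0 mul0r lexx.
have ny : 0 < `|y| by rewrite normr_gt0.
set s := r / (2 * `|y|).
have s0 : 0 < s by apply: divr_gt0 => //; apply: mulr_gt0.
have ws : `|s *: y| < r.
  rewrite normrZ gtr0_norm //.
  have -> : s * `|y| = r / 2 by rewrite /s; field; rewrite gt_eqF.
  lra.
have r4 : 0 < r / 4 by apply: divr_gt0.
have [x [xn Hx]] := step2 _ ws _ r4.
exists (s^-1 *: x); split.
  rewrite normrZ gtr0_norm ?invr_gt0 // /s invf_div.
  have nn : 0 <= n%:R :> R by [].
  have ayr : 0 <= `|y| / r by apply: divr_ge0 => //; apply: ltW.
  apply: (@le_trans _ _ (2 * `|y| / r * (2 * n%:R))).
    apply: ler_wpM2l => //; rewrite -mulrA; apply: mulr_ge0 => //.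
  have -> : 2 * `|y| / r * (2 * n%:R) = (`|y| / r) * (4 * n%:R) by ring.
  have -> : 4 * (n%:R + 1) / r * `|y| = (`|y| / r) * (4 * (n%:R + 1)) by ring.
  apply: ler_wpM2l => //; lra.
have -> : Th (s^-1 *: x) - y = s^-1 *: (Th x - s *: y).
  by rewrite linearZ /= scalerBr scalerA mulVf ?gt_eqF // scale1r.
rewrite normrZ gtr0_norm ?invr_gt0 //.
rewrite /s invf_div.
have -> : `|y| / 2 = 2 * `|y| / r * (r / 4).
  field; rewrite gt_eqF //.
rewrite ler_wpM2l ?ltW //; apply: divr_gt0 => //; apply: mulr_gt0 => //.
Qed.
Lemma bounded_inv_aux : exists M, 0 < M /\ forall x, `|x| <= M * `|Th x|.
Proof.
have [c [c0 Hc]] := approx.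
have [g Hg] := choice Hc.
exists (2 * c); split; first by apply: mulr_gt0.
move=> x; set y := Th x.
pose fix S n := if n is m.+1 then S m + g (y - Th (S m)) else 0.
have Hr : forall n, `|y - Th (S n)| <= `|y| * (1/2)^+n.
  elim => [|m IH]; first by rewrite /= linear0 subr0 expr0 mulr1.
  have -> : y - Th (S m.+1) = - (Th (g (y - Th (S m))) - (y - Th (S m))).
    by rewrite /= linearD opprB opprD addrA.
  rewrite normrN; apply: le_trans (proj2 (Hg _)) _.
  have -> : `|y| * (1/2)^+m.+1 = (`|y| * (1/2)^+m) / 2 by rewrite exprS; ring.
  lra.
have Hd : forall n, `|S n.+1 - S n| <= (c * `|y|) * (1/2)^+n.
  move=> n; rewrite /= addrC addKr.
  apply: le_trans (proj1 (Hg _)) _.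
  by rewrite -mulrA; apply: ler_wpM2l; [apply: ltW|].
have q0 : (0 : R) <= 1/2 by [].
have q1 : (1/2 : R) < 1 by lra.
have [cS bS] := @geom_cvg _ _ S _ _ q0 q1 Hd.
have e1 : Th (limn S) = y.
  have h1 : (Th \o S) n @[n --> \oo] --> Th (limn S).
    by apply: continuous_cvg => //; apply: cTh.
  have h2 : (Th \o S) n @[n --> \oo] --> y.
    apply/cvgrPdist_lt => e e0.
    have := @cvg_geometric R `|y| (1/2) ltac:(rewrite ger0_norm //).
    move=> /cvgrPdist_lt /(_ e e0); apply: filterS => n /=.
    rewrite sub0r normrN /geometric /= ger0_norm ?mulr_ge0 ?exprn_ge0 //.
    exact: le_lt_trans (Hr n).
  exact: (cvg_unique _ h1 h2).
have ex : limn S = x by apply: (bij_inj bTh).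
move: bS; rewrite ex /= sub0r normrN => /le_trans; apply.
rewrite le_eqVlt; apply/orP; left; apply/eqP; by field.
Qed.
End BI.

Lemma bounded_inverse (R : realType) (V W : completeNormedModType R) (Th : {linear V -> W}) :
  continuous Th -> bijective Th -> exists M, 0 < M /\ forall x, `|x| <= M * `|Th x|.
Proof. by move=> cTh bTh; apply: bounded_inv_aux. Qed.
Lemma comparison (R : realType) (psi : R -> R) :
  psi 0 <= 0 ->
  (forall s, 0 <= s -> forall e, 0 < e -> exists d, 0 < d /\
      forall t, 0 <= t -> `|t - s| < d -> `|psi t - psi s| < e) ->
  (forall s, 0 <= s -> psi s <= 0 -> exists d, 0 < d /\
      forall h, 0 < h -> h < d -> psi (s + h) <= 0) ->
  forall t, 0 <= t -> psi t <= 0.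
Proof.
move=> p0 Hc Hr c c0; rewrite leNgt; apply/negP => pc.
set S := [set t | 0 <= t <= c /\ psi t <= 0].
have S0 : S 0 by split => //; apply/andP.
have ubS : ubound S c by move=> t [/andP [_ ->]].
have hS : has_sup S by split; [exists 0 | exists c].
set s := sup S.
have s0 : 0 <= s by apply: sup_upper_bound.
have sc : s <= c by apply: ge_sup => //; exists 0.
have ps : psi s <= 0.
  rewrite leNgt; apply/negP => ps.
  have [d [d0 Hd]] := Hc s s0 _ ps.
  have [t [/andP [t0 tc] pt] st] := sup_adherent d0 hS.
  have ts : t <= s by apply: sup_upper_bound => //; split => //; apply/andP.
  have td : `|t - s| < d by rewrite distrC ger0_norm ?subr_ge0 //; rewrite -/s in st; lra.
  have := Hd t t0 td; rewrite ltr_norml => /andP [+ _]; lra.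
have sc' : s < c by rewrite lt_neqAle sc andbT; apply/eqP => E; rewrite -E in pc; lra.
have [d [d0 Hd]] := Hr s s0 ps.
set h := Num.min d (c - s) / 2.
have h0 : 0 < h by rewrite /h; apply: divr_gt0 => //; rewrite lt_min d0 subr_gt0 sc'.
have hm : Num.min d (c - s) <= d by rewrite ge_min lexx.
have hm' : Num.min d (c - s) <= c - s by rewrite ge_min lexx orbT.
have hdef : h * 2 = Num.min d (c - s) by rewrite /h; field.
have hd : h < d by lra.
have Ssh : S (s + h).
  split; last exact: Hd.
  apply/andP; split; lra.
have := sup_upper_bound hS Ssh; rewrite -/s; lra.
Qed.
Lemma near_right0 (R : realType) (P : R -> Prop) :
  (\forall h \near 0^'+, P h) -> exists d, 0 < d /\ forall h, 0 < h -> h < d -> P h.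
Proof.
rewrite near_withinE => /nbhs_ballP [d /= d0 Hd]; exists d; split => // h h0 hd.
apply: Hd => //; rewrite -ball_normE /ball_ /= sub0r normrN gtr0_norm //.
Qed.

Lemma cont_ed (R : realType) (X : normedModType R) (g : R -> X) s :
  g x @[x --> s] --> g s -> forall e, 0 < e -> exists d, 0 < d /\
    forall t, `|t - s| < d -> `|g t - g s| < e.
Proof.
move/cvgrPdist_lt => H e e0; have := H e e0 => /nbhs_ballP [d /= d0 Hd].
exists d; split => // t ts; rewrite distrC; apply: Hd.
by rewrite -ball_normE /ball_ /= distrC.
Qed.

Lemma deriv_right (R : realType) (X : normedModType R) (g : R -> X) (s : R) (d : X) :
  is_derive s 1 g d -> (fun h => h^-1 *: (g (s + h) - g s)) @ 0^'+ --> d.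
Proof.
case => ex dv; apply: cvg_dnbhs_at_right.
have -> : (fun h => h^-1 *: (g (s + h) - g s)) =
   (fun h => h^-1 *: ((g \o shift s) (h *: 1) - g s)).
  apply: funext => h /=; rewrite /shift /=; have -> : h%:A = h by exact: mulr1. by rewrite (addrC h s).
by rewrite -dv; exact: ex.
Qed.

Lemma right_cont (R : realType) (X : normedModType R) (g : R -> X) (s : R) (d : X) :
  (fun h => h^-1 *: (g (s + h) - g s)) @ 0^'+ --> d ->
  (fun h => g (s + h)) @ 0^'+ --> g s.
Proof.
move=> H.
have h0 : (fun h : R => h) @ 0^'+ --> (0 : R).
  by apply: cvg_at_right_filter; apply: cvg_id.
have H2 : (fun h => h *: (h^-1 *: (g (s + h) - g s))) @ 0^'+ --> 0 *: d.
  by apply: cvgZ.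
rewrite scale0r in H2.
have H3 : (fun h => g s + h *: (h^-1 *: (g (s + h) - g s))) @ 0^'+ --> g s + 0.
  by apply: cvgD => //; apply: cvg_cst.
rewrite addr0 in H3; apply: (cvg_trans _ H3).
apply: near_eq_cvg; near=> h.
rewrite scalerA mulfV; first by rewrite scale1r addrC subrK.
by apply: lt0r_neq0; near: h; exact: nbhs_right_gt.
Unshelve. all: end_near.
Qed.
Lemma quot_mono (R : realType) (W : normedModType R) (a b : W) (h1 h2 : R) :
  0 < h1 -> h1 <= h2 ->
  (`|a + h1 *: b| - `|a|) / h1 <= (`|a + h2 *: b| - `|a|) / h2.
Proof.
move=> h10 h12.
have h20 : 0 < h2 by apply: lt_le_trans h12.
set t := h1 / h2.
have t0 : 0 <= t by apply: divr_ge0; apply: ltW.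
have t1 : 0 <= 1 - t.
  by rewrite subr_ge0 /t ler_pdivrMr // mul1r.
have e : a + h1 *: b = (1 - t) *: a + t *: (a + h2 *: b).
  rewrite scalerBl scale1r scalerDr scalerA addrA subrK.
  by rewrite /t -mulrA mulVf ?gt_eqF // mulr1.
have H : `|a + h1 *: b| <= (1 - t) * `|a| + t * `|a + h2 *: b|.
  rewrite e; apply: le_trans (ler_normD _ _) _.
  by rewrite normrZ (ger0_norm t1) normrZ (ger0_norm t0).
have H2 : `|a + h1 *: b| - `|a| <= t * (`|a + h2 *: b| - `|a|) by lra.
rewrite ler_pdivrMr //.
apply: le_trans H2 _.
rewrite le_eqVlt; apply/orP; left; apply/eqP; rewrite /t; field.
by rewrite gt_eqF.
Qed.

Lemma quot_lb (R : realType) (W : normedModType R) (a b : W) (h : R) :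
  0 < h -> - `|b| <= (`|a + h *: b| - `|a|) / h.
Proof.
move=> h0; rewrite ler_pdivlMr //.
have : `|a| <= `|a + h *: b| + `|h *: b|.
  have {1}-> : a = (a + h *: b) - h *: b by rewrite addrK.
  exact: ler_normB.
rewrite normrZ gtr0_norm //; lra.
Qed.
Lemma key_est (R : realType) (V W : normedModType R) (Th : {linear V -> W})
  (cTh : continuous Th) (lambda : R) (g : V -> V) (x y : V) (U Y : R -> V) :
  (MTheta Th g <= lambda%:E)%E -> lambda < 0 -> Th (x - y) != 0 ->
  (fun h => h^-1 *: (U h - x)) @ 0^'+ --> g x ->
  (fun h => h^-1 *: (Y h - y)) @ 0^'+ --> g y ->
  \forall h \near 0^'+, `|Th (U h - Y h)| - `|Th (x - y)| <= h * (lambda / 2 * `|Th (x - y)|).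
Proof.
move=> HM l0 a0 HU HY.
set a := Th (x - y); set b := Th (g x - g y).
have na : 0 < `|a| by rewrite normr_gt0.
have xy : x <> y by move=> E; move: a0; rewrite /a E subrr linear0 eqxx.
have Hrs : rsip a b / `|a| ^+ 2 <= lambda.
  have : ((rsip a b / `|a| ^+ 2)%:E <= MTheta Th g)%E.
    by apply: ereal_sup_ubound; exists x, y; split.
  by move/le_trans => /(_ _ HM); rewrite lee_fin.
set q := fun h : R => (`|a + h *: b| - `|a|) / h.
have mono : {in Interval (BRight (0:R)) (BInfty _ false) &, {homo q : n m / n <= m}}.
  move=> h1 h2; rewrite !in_itv /= !andbT => h10 _ h12; exact: quot_mono.
have lb : has_lbound [set q h | h in [set` Interval (BRight (0:R)) (BInfty _ false)]].
  exists (- `|b|) => _ [h /= hi <-]; move: hi; rewrite in_itv /= andbT => h0.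
  exact: quot_lb.
have hq := nondecreasing_at_right_cvgr (b := BInfty _ false) ltac:(by []) mono lb.
set L := inf _ in hq.
have rsipE : rsip a b = `|a| * L by rewrite /rsip (cvg_lim _ hq).
have LL : L <= lambda * `|a|.
  move: Hrs; rewrite rsipE.
  have -> : `|a| * L / `|a| ^+ 2 = L / `|a| by field; rewrite gt_eqF.
  by rewrite ler_pdivrMr.
have H1 : \forall h \near 0^'+, q h < 3 / 4 * lambda * `|a|.
  have lt : L < 3 / 4 * lambda * `|a| by nra.
  exact: (cvgr_lt L hq _ lt).
pose Z := fun h => (U h - Y h) - (x - y).
have ZE : forall h, h^-1 *: Z h = h^-1 *: (U h - x) - h^-1 *: (Y h - y).
  move=> h; rewrite -scalerBr; congr (_ *: _); rewrite /Z opprB (addrC y) addrACA.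
  by rewrite [in RHS]opprB (addrC y).
have He : (fun h => h^-1 *: Z h - (g x - g y)) @ 0^'+ --> (0 : V).
  rewrite -(subrr (g x - g y)); apply: cvgB; last exact: cvg_cst.
  under eq_fun do rewrite ZE.
  exact: cvgB.
have HTe : (fun h => Th (h^-1 *: Z h - (g x - g y))) @ 0^'+ --> (0 : W).
  rewrite -(linear0 Th).
  exact: (continuous_cvg _ (cTh 0) He).
have H2 := cvgr0_norm_lt _ HTe (- (lambda / 4) * `|a|) ltac:(nra).
near=> h.
have h0 : 0 < h by near: h; exact: nbhs_right_gt.
have Q : q h < 3 / 4 * lambda * `|a| by near: h; exact: H1.
have E : `|Th (h^-1 *: Z h - (g x - g y))| < - (lambda / 4) * `|a| by near: h; exact: H2.
set e := h^-1 *: Z h - (g x - g y) in E.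
have Hsum : U h - Y h = (x - y) + h *: ((g x - g y) + e).
  rewrite /e [g x - g y + _]addrC subrK scalerA mulfV ?gt_eqF // scale1r /Z.
  by rewrite [x - y + _]addrC subrK.
have TE : Th (U h - Y h) = a + h *: b + h *: Th e.
  rewrite Hsum linearD linearZ /= (linearD Th (g x - g y) e) scalerDr addrA //.
have N1 : `|Th (U h - Y h)| <= `|a + h *: b| + h * `|Th e|.
  by rewrite TE; apply: le_trans (ler_normD _ _) _; rewrite normrZ gtr0_norm.
have N2 : `|a + h *: b| = `|a| + h * q h.
  rewrite /q mulrC divfK ?gt_eqF //; lra.
have N3 : h * q h <= h * (3 / 4 * lambda * `|a|) by apply: ler_wpM2l; [apply: ltW | apply: ltW].
have N4 : h * `|Th e| <= h * (- (lambda / 4) * `|a|) by apply: ler_wpM2l; [apply: ltW | apply: ltW].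
nra.
Unshelve. all: end_near.
Qed.
Lemma contraction_est (R : realType) (V W : normedModType R) (Th : {linear V -> W})
  (cTh : continuous Th) (f : R -> V -> V) (lambda : R)
  (HM : forall t, 0 <= t -> (MTheta Th (f t) <= lambda%:E)%E) (l0 : lambda < 0)
  (u w : R -> V)
  (RDu : forall s, 0 <= s -> (fun h => h^-1 *: (u (s + h) - u s)) @ 0^'+ --> f s (u s))
  (RDw : forall s, 0 <= s -> (fun h => h^-1 *: (w (s + h) - w s)) @ 0^'+ --> f s (w s))
  (CEu : forall s, 0 <= s -> forall e, 0 < e -> exists d, 0 < d /\
      forall t, 0 <= t -> `|t - s| < d -> `|u t - u s| < e)
  (CEw : forall s, 0 <= s -> forall e, 0 < e -> exists d, 0 < d /\
      forall t, 0 <= t -> `|t - s| < d -> `|w t - w s| < e) :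
  forall t, 0 <= t -> `|Th (u t - w t)| <= (`|Th (u 0 - w 0)| + 1) * expR (lambda / 2 * t).
Proof.
set C := `|Th (u 0 - w 0)| + 1.
have C0 : 0 < C by rewrite /C; apply: ltr_wpDl.
pose E := fun t => C * expR (lambda / 2 * t).
pose phi := fun t => `|Th (u t - w t)|.
pose psi := fun t => phi t - E t.
have cE : forall s, E t @[t --> s] --> E s.
  move=> s; apply: cvgM; first exact: cvg_cst.
  apply: (continuous_cvg _ (@continuous_expR R _)).
  apply: cvgM; [exact: cvg_cst | exact: cvg_id].
have cTh0 : forall e, 0 < e -> exists d, 0 < d /\ forall z, `|z| < d -> `|Th z| < e.
  move=> e e0; have := cTh 0; move/cvgrPdist_lt => /(_ e e0) /nbhs_ballP [d /= d0 Hd].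
  exists d; split => // z zd; have := Hd z; rewrite linear0 sub0r normrN; apply.
  by rewrite -ball_normE /ball_ /= sub0r normrN.
have cpsi : forall s, 0 <= s -> forall e, 0 < e -> exists d, 0 < d /\
    forall t, 0 <= t -> `|t - s| < d -> `|psi t - psi s| < e.
  move=> s s0 e e0.
  have e2 : 0 < e / 2 by apply: divr_gt0.
  have [eta [eta0 Heta]] := cTh0 _ e2.
  have eta2 : 0 < eta / 2 by apply: divr_gt0.
  have [d1 [d10 Hd1]] := CEu s s0 _ eta2.
  have [d2 [d20 Hd2]] := CEw s s0 _ eta2.
  have [d3 [d30 Hd3]] := @cont_ed R R^o E s (cE s) _ e2.
  exists (Num.min d1 (Num.min d2 d3)); split.
    by rewrite !lt_min d10 d20 d30.
  move=> t t0; rewrite !lt_min => /andP [td1 /andP [td2 td3]].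
  have A1 := Hd1 t t0 td1; have A2 := Hd2 t t0 td2; have A3 := Hd3 t td3.
  have A4 : `|(u t - w t) - (u s - w s)| < eta.
    have -> : (u t - w t) - (u s - w s) = (u t - u s) - (w t - w s).
      by rewrite opprB (addrC (w s)) addrACA [in RHS]opprB (addrC (w s)).
    apply: le_lt_trans (ler_normB _ _) _; lra.
  have A5 := Heta _ A4; rewrite linearB /= in A5.
  have A6 : `|phi t - phi s| <= `|Th (u t - w t) - Th (u s - w s)|.
    exact: ler_dist_dist.
  rewrite /psi.
  have -> : phi t - E t - (phi s - E s) = (phi t - phi s) - (E t - E s) by ring.
  apply: le_lt_trans (ler_normB _ _) _; lra.
have Hcomp := @comparison R psi.
move=> t t0.
have : psi t <= 0.
  apply: Hcomp => //.
  - rewrite /psi /phi /E mulr0 expR0 mulr1 /C; lra.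
  - move=> s s0 ps.
    have [ps'|ps'|ps'] := ltgtP (psi s) 0.
    + have [d [d0 Hd]] := cpsi s s0 _ (ltac:(lra) : 0 < - psi s).
      exists d; split => // h h0 hd.
      have := Hd (s + h) ltac:(lra); rewrite addrAC subrr add0r gtr0_norm // => /(_ hd).
      rewrite ltr_norml => /andP [_ ?]; lra.
    + lra.
    + have phis : phi s = E s by rewrite /psi in ps'; lra.
      have Es : 0 < E s by apply: mulr_gt0 => //; exact: expR_gt0.
      have nz : Th (u s - w s) != 0.
        by rewrite -normr_eq0; rewrite -/(phi s) phis gt_eqF.
      have := @key_est R V W Th cTh lambda (f s) (u s) (w s) (fun h => u (s + h)) (fun h => w (s + h)) (HM s s0) l0 nz (RDu s s0) (RDw s s0).
      move=> /near_right0 [d [d0 Hd]]; exists d; split => // h h0 hd.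
      have := Hd h h0 hd; rewrite -/(phi s) -/(phi (s + h)) phis => H.
      rewrite /psi /E mulrDr expRD.
      have X1 := expR_ge1Dx (lambda / 2 * h).
      have X2 : C * expR (lambda / 2 * s) * (1 + lambda / 2 * h) <=
                C * expR (lambda / 2 * s) * expR (lambda / 2 * h).
        by apply: ler_wpM2l => //; apply: ltW.
      rewrite /E in H Es.
      nra.
rewrite /psi /phi /E; lra.
Qed.
Lemma sol_props (R : realType) (V : normedModType R) (f : R -> V -> V) (u : R -> V) :
  is_solution f u ->
  (forall s, 0 <= s -> (fun h => h^-1 *: (u (s + h) - u s)) @ 0^'+ --> f s (u s)) /\
  (forall s, 0 <= s -> forall e, 0 < e -> exists d, 0 < d /\
      forall t, 0 <= t -> `|t - s| < d -> `|u t - u s| < e).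
Proof.
move=> [Hd [H0 _]].
have RD : forall s, 0 <= s -> (fun h => h^-1 *: (u (s + h) - u s)) @ 0^'+ --> f s (u s).
  move=> s; rewrite le_eqVlt => /orP [/eqP <-|s0].
    by under eq_fun do rewrite add0r.
  exact: deriv_right (Hd s s0).
split => // s; rewrite le_eqVlt => /orP [/eqP <-|s0].
  move=> e e0.
  have := @right_cont R V u 0 _ (RD 0 (lexx 0)).
  move/cvgrPdist_lt => /(_ e e0) /near_right0 [d [d0 Hd']].
  exists d; split => // t; rewrite le_eqVlt => /orP [/eqP <-|t0].
    by move=> _; rewrite subrr normr0.
  rewrite subr0 gtr0_norm // => td.
  by have := Hd' t t0 td; rewrite add0r distrC.
have cu : u x @[x --> s] --> u s.
  apply: differentiable_continuous; apply/derivable1_diffP.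
  by case: (Hd s s0).
move=> e e0; have [d [d0 Hd']] := @cont_ed R V u s cu e e0.
by exists d; split => // t _; apply: Hd'.
Qed.

Lemma expR_tail (R : realType) (mu A : R) : mu < 0 ->
  (fun t => A * expR (mu * t)) @ +oo --> (0 : R).
Proof.
move=> mu0; apply/cvgrPdist_lt => e e0.
have e' : 0 < e / (`|A| + 1) by apply: divr_gt0 => //; apply: ltr_wpDl.
have := @cvgr_expR R; move/cvgrPdist_lt => /(_ _ e') [M0 [M0r HM0]].
exists (M0 / (- mu)); split.
  exact: num_real.
move=> t tM.
have : M0 < - (mu * t).
  move: tM; rewrite ltr_pdivrMr ?oppr_gt0 //; lra.
move=> /HM0; rewrite opprK sub0r normrN sub0r normrN normrM (gtr0_norm (expR_gt0 _)) => H.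
have Ae : `|A| * expR (mu * t) <= `|A| * (e / (`|A| + 1)).
  by apply: ler_wpM2l => //; apply: ltW.
apply: le_lt_trans Ae _.
rewrite mulrA ltr_pdivrMr; last by apply: ltr_wpDl.
nra.
Qed.
Theorem mainTheorem12 (R : realType) (V W : completeNormedModType R)
  (T : {linear V -> V}) (k : nat) (f : R -> V -> V) (dt : R)
  (Theta : {linear V -> W}) (lambda : R) :
  continuous T -> bijective T ->
  (0 < k)%N -> (forall x : V, iter k T x = x) ->
  0 < dt ->
  (forall (t : R) (u : V), 0 <= t -> f t (T u) = T (f (t + dt) u)) ->
  isGL Theta -> lambda < 0 ->
  (forall t : R, 0 <= t -> (MTheta Theta (f t) <= lambda%:E)%E) ->
  forall u : R -> V, is_solution f u ->
  exists p : R -> V,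
    (forall t : R, 0 <= t -> p (t + k%:R * dt) = p t) /\
    (forall t : R, 0 <= t ->
       (fun n : nat => u (t + n%:R * (k%:R * dt))) @ \oo --> p t) /\
    ((fun t : R => `|u t - p t|) @ +oo --> (0 : R)).
Proof.
move=> cT bT k0 Tk dt0 HfT [cTh bTh] l0 HM u sol.
set K := k%:R * dt.
have K0 : 0 < K by apply: mulr_gt0 => //; rewrite ltr0n.
have iterf : forall j s x, 0 <= s -> f s (iter j T x) = iter j T (f (s + j%:R * dt) x).
  elim => [|j IH] s x s0; first by rewrite /= mul0r addr0.
  rewrite iterS HfT; last by [].
  rewrite IH; last by lra.
  rewrite -iterS; congr (iter _ T (f _ x)).
  by rewrite -natr1; ring.
have fper : forall s x, 0 <= s -> f (s + K) x = f s x.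
  by move=> s x s0; rewrite -{2}(Tk x) iterf // Tk.
have [RDu CEu] := @sol_props R V f u sol.
pose w := fun t => u (t + K).
have RDw : forall s, 0 <= s -> (fun h => h^-1 *: (w (s + h) - w s)) @ 0^'+ --> f s (w s).
  move=> s s0; rewrite /w -fper //.
  have -> : (fun h => h^-1 *: (u (s + h + K) - u (s + K))) =
            (fun h => h^-1 *: (u (s + K + h) - u (s + K))).
    by apply: funext => h; rewrite addrAC.
  apply: RDu; lra.
have CEw : forall s, 0 <= s -> forall e, 0 < e -> exists d, 0 < d /\
      forall t, 0 <= t -> `|t - s| < d -> `|w t - w s| < e.
  move=> s s0 e e0; have [d [d0 Hd]] := CEu (s + K) ltac:(lra) e e0.
  exists d; split => // t t0 ts; apply: Hd; first lra.
  by rewrite opprD addrACA subrr addr0.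
have est := @contraction_est R V W Theta cTh f lambda HM l0 u w RDu RDw CEu CEw.
have [M [M0 HMb]] := @bounded_inverse R V W Theta cTh bTh.
set C := `|Theta (u 0 - w 0)| + 1 in est.
have C0 : 0 < C by apply: ltr_wpDl.
set mu := lambda / 2.
have mu0 : mu < 0 by rewrite /mu; lra.
set q := expR (mu * K).
have q0 : 0 <= q by apply: ltW; apply: expR_gt0.
have q1 : q < 1 by rewrite /q expR_lt1; nra.
have seqb : forall t, 0 <= t -> forall n,
    `|u (t + n.+1%:R * K) - u (t + n%:R * K)| <= (M * C * expR (mu * t)) * q ^+ n.
  move=> t t0 n.
  have sn : 0 <= t + n%:R * K by apply: addr_ge0 => //; apply: mulr_ge0 => //; apply: ltW.
  have -> : t + n.+1%:R * K = (t + n%:R * K) + K by rewrite -natr1; ring.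
  apply: le_trans (HMb _) _.
  rewrite -/(w (t + n%:R * K)) -[w _ - u _]opprB linearN normrN.
  have := est _ sn; rewrite -/mu => H.
  apply: le_trans (ler_wpM2l (ltW M0) H) _.
  rewrite mulrDr expRD (mulrCA mu) expRM_natl -/q.
  by rewrite !mulrA.
pose p := fun t => limn (fun n => u (t + n%:R * K)).
have cvgp : forall t, 0 <= t -> cvgn (fun n => u (t + n%:R * K)) /\
    `|u t - p t| <= M * C * expR (mu * t) / (1 - q).
  move=> t t0; have [c1 c2] := @geom_cvg R V (fun n => u (t + n%:R * K)) _ _ q0 q1 (seqb t t0).
  by split => //; move: c2; rewrite /= mul0r addr0.
exists p; split; last split.
- move=> t t0; rewrite /p.
  have [c1 _] := cvgp t t0.
  have -> : (fun n => u (t + K + n%:R * K)) = (fun n => u (t + n.+1%:R * K)).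
    by apply: funext => n; rewrite -natr1; congr u; ring.
  apply: cvg_lim => //.
  by rewrite (cvg_shiftS (fun n => u (t + n%:R * K))).
- by move=> t t0; have [c1 _] := cvgp t t0.
- apply: (@squeeze_cvgr _ _ _ _ (fun _ => 0) (fun t => M * C / (1 - q) * expR (mu * t))).
  + near=> t.
    have t0 : 0 <= t by near: t; apply: nbhs_pinfty_ge; exact: num_real.
    rewrite normr_ge0 /=; have [_ H] := cvgp t t0.
    apply: le_trans H _; rewrite le_eqVlt; apply/orP; left; apply/eqP; field.
    by rewrite subr_eq0 eq_sym lt_eqF.
  + exact: cvg_cst.
  + exact: expR_tail.
Unshelve. all: end_near.
Qed.
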